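(* Let $N_1$ and $N_2$ be Petri nets. If $N_1\approx^\Delta_{bSTb}N_2$ then $N_1\approx_{\mathscr F}N_2$.
   Context: Fix visible actions $\mathrm{Act}$ and $\tau\notin\mathrm{Act}$. A Petri net $N=(S,T,F,M_0,\ell)$ has disjoint $S,T$, $F:(S\times T)\cup(T\times S)\to\mathbb N$, $M_0\in\mathbb N^S$, $\ell:T\to\mathrm{Act}\cup\{\tau\}$. ${}^\bullet x(y)=F(y,x)$, $x^\bullet(y)=F(x,y)$, extended additively to finite multisets. For finite nonempty multiset $G$ of transitions, $M[G\rangle M'$ iff ${}^\bullet G\le M$ and $M'=M-{}^\bullet G+G^\bullet$. Step failures equivalence: $M\xrightarrow{\alpha}M'$ iff $M[t\rangle M'$ with $\ell(t)=\alpha$; $\Rightarrow$ is the reflexive transitive closure of $\xrightarrow{\tau}$; $M\overset{a_1\cdots a_n}{\Longrightarrow}M'$ iff $M\Rightarrow\xrightarrow{a_1}\Rightarrow\cdots\xrightarrow{a_n}\Rightarrow M'$. For a step $A$ (finite nonempty multiset over $\mathrm{Act}$), $M\xrightarrow{A}$ iff $M[G\rangle$ for a finite multiset $G$ of transitions, none labelled $\tau$, with label multiset $A$. $(\sigma,X)$ with $\sigma\in\mathrm{Act}^*$ and $X$ a finite set of steps is a step failure pair iff some $M$ has $M_0\overset{\sigma}{\Longrightarrow}M$, $M\not\xrightarrow{\tau}$ and $M\not\xrightarrow{A}$ for all $A\in X$. $N_1\approx_{\mathscr F}N_2$ iff they have the same step failure pairs. $\approx^\Delta_{bSTb}$: An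 ST-marking is $(M,U)\in\mathbb N^S\times T^*$, initial $(M_0,\varepsilon)$; $(M,U)\xrightarrow{a^+}(M-{}^\bullet t,Ut)$ iff $\ell(t)=a\in\mathrm{Act}$ and $M[t\rangle$; $(M,U)\xrightarrow{a^{-n}}(M+t^\bullet,U^{-n})$ iff the $n$-th element $t$ of $U$ has label $a$ ($U^{-n}$: with it removed); $(M,U)\xrightarrow{\tau}(M',U)$ iff $M[t\rangle M'$ with $\ell(t)=\tau$. $N_1\approx^\Delta_{bSTb}N_2$ iff there is a relation $\mathcal B$ between ST-markings of $N_1$ and $N_2$ relating the initial ones such that: if $\mathfrak M_1\mathcal B\mathfrak M_2$ and $\mathfrak M_1\xrightarrow{\alpha}\mathfrak M_1'$ then $\mathfrak M_2\Rightarrow\mathfrak M_2^\dagger\xrightarrow{(\alpha)}\mathfrak M_2'$ with $\mathfrak M_1\mathcal B\mathfrak M_2^\dagger$ and $\mathfrak M_1'\mathcal B\mathfrak M_2'$ (here $\Rightarrow$ is the reflexive transitive closure of $\xrightarrow{\tau}$ and $\xrightarrow{(\alpha)}$ means $\xrightarrow{\alpha}$ or, if $\alpha=\tau$, equality), and symmetrically; and if $\mathfrak M_1\mathcal B\mathfrak M_2$ and there is an infinite $\tau$-sequence from $\mathfrak M_1$ all of whose states are related to $\mathfrak M_2$, then there is an infinite $\tau$-sequence from $\mathfrak M_2$ with every state of the first related to every state of the second, and symmetrically. *)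

(* Defs.v *)
From Stdlib Require Import List Permutation Arith.
Import ListNotations.
Set Implicit Arguments.

(* Visible actions are the elements of [Act]; tau is encoded as [None]. *)
Record PetriNet (Act : Type) := {
  place : Type;
  trans : Type;
  F_pt : place -> trans -> nat;
  F_tp : trans -> place -> nat;
  M0 : place -> nat;
  lab : trans -> option Act
}.
Arguments place {Act}. Arguments trans {Act}. Arguments F_pt {Act}.
Arguments F_tp {Act}. Arguments M0 {Act}. Arguments lab {Act}.

Section Nets.
Context {Act : Type} (N : PetriNet Act).

Definition marking := place N -> nat.

Definition preset_ms (G : list (trans N)) (s : place N) : nat :=
  fold_right (fun t acc => F_pt N s t + acc) 0 G.

Definition enabled (M : marking) (t : trans N) : Prop :=
  forall s, F_pt N s t <= M s.

Definition fire (M : marking) (t : trans N) (M' : marking) : Prop :=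
  enabled M t /\ forall s, M' s = M s - F_pt N s t + F_tp N t s.

Definition net_step (M : marking) (alpha : option Act) (M' : marking) : Prop :=
  exists t, lab N t = alpha /\ fire M t M'.

Inductive weak_trace : marking -> list Act -> marking -> Prop :=
| wt_nil : forall M, weak_trace M [] M
| wt_tau : forall M M1 sigma M2,
    net_step M None M1 -> weak_trace M1 sigma M2 -> weak_trace M sigma M2
| wt_act : forall M a M1 sigma M2,
    net_step M (Some a) M1 -> weak_trace M1 sigma M2 -> weak_trace M (a :: sigma) M2.

(* M --A--> for a step A (finite multiset over Act, as a list up to permutation):
   some finite multiset G of non-tau transitions with label multiset A is
   enabled, i.e. its preset is below M. *)
Definition step_enabled (M : marking) (A : list Act) : Prop :=
  exists G : list (trans N),
    Permutation (map (lab N) G) (map Some A) /\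
    forall s, preset_ms G s <= M s.

Definition tau_stable (M : marking) : Prop :=
  forall M', ~ net_step M None M'.

Definition step_failure_pair (sigma : list Act) (X : list (list Act)) : Prop :=
  (forall A, In A X -> A <> []) /\
  exists M, weak_trace (M0 N) sigma M /\ tau_stable M /\
            forall A, In A X -> ~ step_enabled M A.

Definition STmarking := (marking * list (trans N))%type.

Inductive STlabel := STplus (a : Act) | STminus (a : Act) (n : nat) | STtau.

Inductive st_step : STmarking -> STlabel -> STmarking -> Prop :=
| st_plus : forall M U t a M',
    lab N t = Some a -> enabled M t ->
    (forall s, M' s = M s - F_pt N s t) ->
    st_step (M, U) (STplus a) (M', U ++ [t])
| st_minus : forall M U n t a M',
    (* the n-th element (1-indexed) of U is t *)
    1 <= n -> nth_error U (n - 1) = Some t -> lab N t = Some a ->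
    (forall s, M' s = M s + F_tp N t s) ->
    st_step (M, U) (STminus a n) (M', firstn (n - 1) U ++ skipn n U)
| st_tau : forall M U t M',
    lab N t = None -> fire M t M' ->
    st_step (M, U) STtau (M', U).

Definition st_tau_star : STmarking -> STmarking -> Prop :=
  Relation_Operators.clos_refl_trans _ (fun x y => st_step x STtau y).

Definition st_opt_step (x : STmarking) (alpha : STlabel) (y : STmarking) : Prop :=
  st_step x alpha y \/ (alpha = STtau /\ y = x).

Definition tau_run (x0 : STmarking) (x : nat -> STmarking) : Prop :=
  x 0 = x0 /\ forall i, st_step (x i) STtau (x (S i)).

End Nets.

Arguments STmarking {Act} N.
Arguments st_step {Act} N _ _ _.
Arguments st_tau_star {Act} N _ _.
Arguments st_opt_step {Act} N _ _ _.
Arguments tau_run {Act} N _ _.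
Arguments step_failure_pair {Act} N _ _.

Section Bisim.
Context {Act : Type} (N1 N2 : PetriNet Act).

Definition bSTb_transfer {P Q : PetriNet Act}
  (B : STmarking P -> STmarking Q -> Prop) : Prop :=
  (forall m1 m2 alpha m1',
      B m1 m2 -> st_step P m1 alpha m1' ->
      exists m2d m2', st_tau_star Q m2 m2d /\ st_opt_step Q m2d alpha m2' /\
                      B m1 m2d /\ B m1' m2') /\
  (forall m1 m2 (x : nat -> STmarking P),
      B m1 m2 -> tau_run P m1 x -> (forall i, B (x i) m2) ->
      exists y : nat -> STmarking Q, tau_run Q m2 y /\
                 forall i j, B (x i) (y j)).

Definition bSTb_equiv : Prop :=
  exists B : STmarking N1 -> STmarking N2 -> Prop,
    B (M0 N1, []) (M0 N2, []) /\
    bSTb_transfer B /\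
    bSTb_transfer (fun m2 m1 => B m1 m2).

Definition step_failures_equiv : Prop :=
  forall sigma X, step_failure_pair N1 sigma X <-> step_failure_pair N2 sigma X.

End Bisim.

(* Main.v *)
Require Import Defs.
From Stdlib Require Import List Permutation Arith.
From Stdlib Require Import Lia Classical ClassicalEpsilon FunctionalExtensionality Relations.
Import ListNotations.

Section L.
Context {Act : Type}.

Lemma wt_app (N : PetriNet Act) M X sg Y :
  @weak_trace _ N M [] X -> @weak_trace _ N X sg Y -> @weak_trace _ N M sg Y.
Proof.
  intros H1; remember (@nil Act) as e eqn:He; revert He.
  induction H1; intros He H2; subst; auto.
  - eapply wt_tau; eauto.
  - discriminate.
Qed.

Lemma tau_star_wt (N : PetriNet Act) M U y :
  st_tau_star N (M,U) y -> exists M', y = (M',U) /\ @weak_trace _ N M [] M'.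
Proof.
  intro H. apply Operators_Properties.clos_rt_rt1n in H.
  remember (M,U) as x eqn:Hx. revert M Hx.
  induction H; intros Ma Hx; subst.
  - exists Ma; split; auto; constructor.
  - inversion H; subst.
    destruct (IHclos_refl_trans_1n M' eq_refl) as [M'' [-> Hw]].
    exists M''; split; auto. eapply wt_tau; [exists t; split; eauto | exact Hw].
Qed.

Lemma fire_lift (N : PetriNet Act) M t M' (K : marking N) :
  @fire _ N M t M' -> @fire _ N (fun s => M s + K s) t (fun s => M' s + K s).
Proof.
  intros [He Hs]; split.
  - intro s; specialize (He s); lia.
  - intro s; rewrite Hs; specialize (He s); lia.
Qed.

Lemma wt_lift (N : PetriNet Act) M sg M' (K : marking N) :
  @weak_trace _ N M sg M' -> @weak_trace _ N (fun s => M s + K s) sg (fun s => M' s + K s).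
Proof.
  induction 1.
  - constructor.
  - destruct H as [t [Hl Hf]]. eapply wt_tau; [exists t; split; [exact Hl| apply fire_lift; exact Hf] | exact IHweak_trace].
  - destruct H as [t [Hl Hf]]. eapply wt_act; [exists t; split; [exact Hl| apply fire_lift; exact Hf] | exact IHweak_trace].
Qed.

Lemma st_stuck (N : PetriNet Act) x y :
  (forall z, ~ st_step N x STtau z) -> st_tau_star N x y -> y = x.
Proof.
  intros Hn H. apply Operators_Properties.clos_rt_rt1n in H.
  destruct H; auto. exfalso; eapply Hn; eauto.
Qed.

Lemma noTau (N : PetriNet Act) (M M' : marking N) U :
  @tau_stable _ N M -> (forall s, M' s <= M s) -> forall z, ~ st_step N (M',U) STtau z.
Proof.
  intros Hst Hle z Hz. inversion Hz; subst. idtac.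
  destruct H2 as [He _].
  apply (Hst (fun s => M s - F_pt N s t + F_tp N t s)).
  exists t; split; auto; split.
  - intro s; specialize (He s); specialize (Hle s); lia.
  - auto.
Qed.


Lemma part1 (P Q : PetriNet Act) (B : STmarking P -> STmarking Q -> Prop)
  (HT : bSTb_transfer B) :
  forall M1 sg M1', @weak_trace _ P M1 sg M1' -> forall M2, B (M1,[]) (M2,[]) ->
  exists M2', @weak_trace _ Q M2 sg M2' /\ B (M1',[]) (M2',[]).
Proof.
  destruct HT as [HS _].
  induction 1 as [M|M Ma sg Mb Hn Hw IH|M a Ma sg Mb Hn Hw IH]; intros M2 HB.
  - exists M2; split; [constructor|auto].
  - destruct Hn as [t [Hl Hf]].
    assert (Hst : st_step P (M,[]) STtau (Ma,[])) by (econstructor; eauto).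
    destruct (HS _ _ _ _ HB Hst) as [m2d [m2' [Hts [Hop [_ HB']]]]].
    destruct (tau_star_wt _ _ _ _ Hts) as [D [-> HwD]].
    destruct Hop as [Hop | [_ ->]].
    + inversion Hop; subst.
      destruct (IH _ HB') as [M2' [Hw2 HB2]]. exists M2'; split; auto.
      eapply wt_app; [exact HwD|]. eapply wt_tau; [exists t0; split; eauto|exact Hw2].
    + destruct (IH _ HB') as [M2' [Hw2 HB2]]. exists M2'; split; auto.
      eapply wt_app; eauto.
  - destruct Hn as [t [Hl [He Hs]]].
    set (Mm := fun s => M s - F_pt P s t).
    assert (H1 : st_step P (M,[]) (STplus a) (Mm,[]++[t])) by (econstructor; eauto).
    simpl in H1.
    destruct (HS _ _ _ _ HB H1) as [m2d [m2' [Hts [Hop [_ HB1]]]]].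
    destruct (tau_star_wt _ _ _ _ Hts) as [D [-> HwD]].
    destruct Hop as [Hop | [Habs _]]; [|discriminate].
    inversion Hop; subst. simpl in HB1.
    assert (H2 : st_step P (Mm,[t]) (STminus a 1) (Ma, [])).
    { change (st_step P (Mm,[t]) (STminus a 1) (Ma, firstn (1-1) [t] ++ skipn 1 [t])).
      econstructor. all: try reflexivity. all: eauto. }
    destruct (HS _ _ _ _ HB1 H2) as [m2d2 [m2'' [Hts2 [Hop2 [_ HB2]]]]].
    destruct (tau_star_wt _ _ _ _ Hts2) as [G [-> HwG]].
    destruct Hop2 as [Hop2|[Habs _]]; [|discriminate].
    inversion Hop2; subst. simpl in *.
    injection H9 as <-.
    destruct (IH _ HB2) as [M2' [Hw2 HB3]]. exists M2'; split; auto.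
    eapply wt_app; [exact HwD|].
    eapply wt_act.
    + exists t0; split; [exact H3|]. split; [exact H4|].
      instantiate (1 := fun s => M' s + F_tp Q t0 s). intro s; simpl; rewrite H6; reflexivity.
    + apply wt_app with (X := M'0); [|exact Hw2].
      assert (E : M'0 = fun s => G s + F_tp Q t0 s)
        by (apply functional_extensionality; exact H12).
      rewrite E. apply wt_lift. exact HwG.
Qed.

Lemma wt_app_r (N : PetriNet Act) M X sg Y :
  weak_trace M sg X -> weak_trace X [] Y -> @weak_trace _ N M sg Y.
Proof.
  induction 1; intros HY; auto.
  - eapply wt_tau; eauto.
  - eapply wt_act; eauto.
Qed.

Lemma st_of_net (N : PetriNet Act) (y z : marking N) U :
  net_step y None z -> st_step N (y,U) STtau (z,U).
Proof. intros [t [Hl Hf]]. econstructor; eauto. Qed.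

Lemma part2 (P Q : PetriNet Act) (B : STmarking P -> STmarking Q -> Prop)
  (HC : bSTb_transfer (fun m2 m1 => B m1 m2)) (M : marking P) (M2 : marking Q) :
  tau_stable M -> B (M,[]) (M2,[]) ->
  exists M2s, weak_trace M2 [] M2s /\ tau_stable M2s /\ B (M,[]) (M2s,[]).
Proof.
  intros Hst HB. destruct HC as [HS HD].
  apply NNPP; intro Hno.
  set (Pr := fun y => weak_trace M2 [] y /\ B (M,[]) (y,[])).
  assert (Hsucc : forall y, Pr y -> {z | Pr z /\ net_step y None z}).
  { intros y [Hy HBy]. apply constructive_indefinite_description.
    assert (Hns : ~ tau_stable y) by (intro; apply Hno; eauto).
    unfold tau_stable in Hns. apply not_all_ex_not in Hns as [z Hz]. apply NNPP in Hz.
    exists z. split; [|exact Hz].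
    pose proof (st_of_net _ _ _ [] Hz) as Hstep.
    destruct (HS _ _ _ _ HBy Hstep) as [m1d [m1' [Hts [Hop [_ HB']]]]].
    pose proof (st_stuck _ _ _ (noTau _ M M [] Hst (fun s => le_n _)) Hts) as ->.
    destruct Hop as [Hop | [_ ->]].
    - exfalso; eapply noTau; [exact Hst| exact (fun s => le_n _)| exact Hop].
    - split; [|exact HB']. eapply wt_app; [exact Hy|]. eapply wt_tau; [exact Hz| constructor]. }
  set (S := {y | Pr y}).
  set (f := fun p : S => exist Pr (proj1_sig (Hsucc _ (proj2_sig p)))
                                 (proj1 (proj2_sig (Hsucc _ (proj2_sig p))))).
  assert (HP0 : Pr M2) by (split; [constructor|exact HB]).
  set (x0 := exist Pr M2 HP0 : S).
  set (run := fun i => (proj1_sig (Nat.iter i f x0), @nil (trans Q))).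
  assert (Hrun : tau_run Q (M2,[]) run).
  { split; [reflexivity|]. intro i. unfold run. simpl.
    apply st_of_net. exact (proj2 (proj2_sig (Hsucc _ (proj2_sig (Nat.iter i f x0))))). }
  assert (Hall : forall i, B (M,[]) (run i)).
  { intro i. exact (proj2 (proj2_sig (Nat.iter i f x0))). }
  destruct (HD _ _ _ HB Hrun Hall) as [y [[Hy0 Hy] _]].
  specialize (Hy 0). rewrite Hy0 in Hy.
  eapply noTau; [exact Hst| exact (fun s => le_n _)| exact Hy].
Qed.

Lemma part3 (P Q : PetriNet Act) (B : STmarking P -> STmarking Q -> Prop)
  (HC : bSTb_transfer (fun m2 m1 => B m1 m2)) (M : marking P) (Hst : tau_stable M) :
  forall G (M' : marking P) U1 (K2 : marking Q) U2, (forall s, M' s <= M s) ->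
  B (M',U1) (K2,U2) -> (forall s, preset_ms Q G s <= K2 s) ->
  (forall t, In t G -> lab Q t <> None) ->
  exists G1, map (lab P) G1 = map (lab Q) G /\ forall s, preset_ms P G1 s <= M' s.
Proof.
  destruct HC as [HS _].
  induction G as [|t G IH]; intros M' U1 K2 U2 Hle HB Hpre Hlab.
  - exists []; split; [reflexivity|]. intro s; simpl; lia.
  - destruct (lab Q t) as [a|] eqn:Hl; [|exfalso; apply (Hlab t); simpl; auto].
    set (K2' := fun s => K2 s - F_pt Q s t).
    assert (Hstep : st_step Q (K2,U2) (STplus a) (K2', U2 ++ [t])).
    { econstructor; eauto. intro s; specialize (Hpre s); simpl in Hpre; lia. }
    destruct (HS _ _ _ _ HB Hstep) as [m1d [m1' [Hts [Hop [_ HB']]]]].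
    pose proof (st_stuck _ _ _ (noTau _ M M' U1 Hst Hle) Hts) as ->.
    destruct Hop as [Hop | [Habs _]]; [|discriminate].
    inversion Hop; subst.
    destruct (IH M'0 _ _ _ (fun s => Nat.le_trans _ _ _ (ltac:(rewrite (H5 s); lia) : M'0 s <= M' s) (Hle s)) HB')
      as [G1 [Hm Hp]].
    + intro s; specialize (Hpre s); simpl in Hpre; unfold K2'; lia.
    + intros u Hu; apply Hlab; simpl; auto.
    + exists (t0 :: G1); split.
      * simpl; rewrite Hm; congruence.
      * intro s; simpl; specialize (Hp s); rewrite H5 in Hp; specialize (H3 s); lia.
Qed.

Lemma one_dir (P Q : PetriNet Act) (B : STmarking P -> STmarking Q -> Prop) :
  B (M0 P, []) (M0 Q, []) -> bSTb_transfer B -> bSTb_transfer (fun m2 m1 => B m1 m2) ->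
  forall sg X, step_failure_pair P sg X -> step_failure_pair Q sg X.
Proof.
  intros H0 HT HC sg X [Hne [M [Hw [Hst Href]]]].
  split; [exact Hne|].
  destruct (part1 _ _ _ HT _ _ _ Hw _ H0) as [M2 [Hw2 HB2]].
  destruct (part2 _ _ _ HC _ _ Hst HB2) as [M2s [Hw3 [Hst3 HB3]]].
  exists M2s; split; [eapply wt_app_r; eauto|split; [exact Hst3|]].
  intros A HA [G [Hperm Hpre]]. apply (Href A HA).
  destruct (part3 _ _ _ HC _ Hst G M [] M2s [] (fun s => le_n _) HB3 Hpre) as [G1 [Hm Hp]].
  - intros t Ht Hn. assert (Hi : In (lab Q t) (map Some A)).
    { eapply Permutation_in; [exact Hperm|]. apply in_map; exact Ht. }
    rewrite Hn in Hi. apply in_map_iff in Hi as [x [Hx _]]; discriminate.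
  - exists G1; split; [rewrite Hm; exact Hperm|exact Hp].
Qed.

End L.

Theorem proposition3p8 (Act : Type) (N1 N2 : PetriNet Act) :
  bSTb_equiv N1 N2 -> step_failures_equiv N1 N2.
Proof.
  intros [B [H0 [HT HC]]] sg X. split.
  - exact (one_dir _ _ _ H0 HT HC sg X).
  - exact (one_dir _ _ (fun m2 m1 => B m1 m2) H0 HC HT sg X).
Qed.
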